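(* Assume the abstract framework described in the context. For $f\in\mathcal{D}_2$ and $F\in\mathcal{H}_2$ with $\operatorname{Tr}_2F=f$, set $\operatorname{Tr}_2^\Omega\mathbf{D}^B_\Omega f=-\operatorname{Tr}_2F+\operatorname{Tr}_2\Pi^L(L(\mathbf{1}_\Omega F))$ and $\operatorname{Tr}_2^{\mathcal{C}}\mathbf{D}^B_{\mathcal{C}}f=-\operatorname{Tr}_2F+\operatorname{Tr}_2\Pi^L(L(\mathbf{1}_{\mathcal{C}}F))$. Then for all $f\in\mathcal{D}_2$ and $g\in\mathcal{N}_2$, $$\operatorname{Tr}_2^\Omega\mathbf{D}^B_\Omega f+\operatorname{Tr}_2^{\mathcal{C}}\mathbf{D}^B_{\mathcal{C}}f=-f,\qquad \mathbf{M}^\Omega_B\big((\mathbf{S}^L_\Omega g)|_\Omega\big)+\mathbf{M}^{\mathcal{C}}_B\big((\mathbf{S}^L_\Omega g)|_{\mathcal{C}}\big)=g,\qquad \mathbf{M}^\Omega_B(\mathbf{D}^B_\Omega f)-\mathbf{M}^{\mathcal{C}}_B(\mathbf{D}^B_{\mathcal{C}}f)=0.$$ If moreover there are bounded operators $\operatorname{Tr}_2^\Omega:\mathcal{H}_2^\Omega\to\mathcal{D}_2$ and $\operatorname{Tr}_2^{\mathcal{C}}:\mathcal{H}_2^{\mathcal{C}}\to\mathcal{D}_2$ such that $\operatorname{Tr}_2F=\operatorname{Tr}_2^\Omega(F|_\Omega)=\operatorname{Tr}_2^{\mathcal{C}}(F|_{\mathcal{C}})$ for all $F\in\mathcal{H}_2$,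 then in addition $\operatorname{Tr}_2^\Omega\big((\mathbf{S}^L_\Omega g)|_\Omega\big)-\operatorname{Tr}_2^{\mathcal{C}}\big((\mathbf{S}^L_\Omega g)|_{\mathcal{C}}\big)=0$ for all $g\in\mathcal{N}_2$.
   Context: Abstract framework. Let $\mathcal{H}_1,\mathcal{H}_2$ be complex Hilbert spaces, and for $j=1,2$ let $\widehat{\mathcal{H}}_j^\Omega$, $\widehat{\mathcal{H}}_j^{\mathcal{C}}$, $\widehat{\mathcal{D}}_j$ be normed (or seminormed) vector spaces, with bounded linear operators $\operatorname{Tr}_j:\mathcal{H}_j\to\widehat{\mathcal{D}}_j$ and bounded linear ''restriction'' operators $F\mapsto F|_\Omega\in\widehat{\mathcal{H}}_j^\Omega$, $F\mapsto F|_{\mathcal{C}}\in\widehat{\mathcal{H}}_j^{\mathcal{C}}$ on $\mathcal{H}_j$. Define $\mathcal{H}_j^\Omega=\{F|_\Omega:F\in\mathcal{H}_j\}$, $\mathcal{H}_j^{\mathcal{C}}$ and $\mathcal{D}_j=\{\operatorname{Tr}_jF:F\in\mathcal{H}_j\}$ with the quotient norms $\inf\|F\|_{\mathcal{H}_j}$ over preimages (modulo elements of norm zero). Let $\mathcal{N}_2=\mathcal{D}_1^*$, $\mathcal{N}_1=\mathcal{D}_2^*$ with duality pairings $\langle\cdot,\cdot\rangle$. Given are bounded bilinear forms $B:\mathcal{H}_1\times\mathcal{H}_2\to\mathbb{C}$, $B^\Omega:\mathcal{H}_1^\Omega\times\mathcal{H}_2^\Omega\to\mathbb{C}$, $B^{\mathcal{C}}:\mathcal{H}_1^{\mathcal{C}}\times\mathcal{H}_2^{\mathcal{C}}\to\mathbb{C}$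 and $\lambda>0$ such that for all $u\in\mathcal{H}_1$, $v\in\mathcal{H}_2$, $\varphi,\psi\in\mathcal{H}_j$: (i) $\sup_{w\ne0}|B(w,v)|/\|w\|_{\mathcal{H}_1}\ge\lambda\|v\|_{\mathcal{H}_2}$ and $\sup_{w\ne0}|B(u,w)|/\|w\|_{\mathcal{H}_2}\ge\lambda\|u\|_{\mathcal{H}_1}$; (ii) $B(u,v)=B^\Omega(u|_\Omega,v|_\Omega)+B^{\mathcal{C}}(u|_{\mathcal{C}},v|_{\mathcal{C}})$; (iii) if $\operatorname{Tr}_j\varphi=\operatorname{Tr}_j\psi$ there is $w\in\mathcal{H}_j$ with $w|_\Omega=\varphi|_\Omega$, $w|_{\mathcal{C}}=\psi|_{\mathcal{C}}$, $\operatorname{Tr}_jw=\operatorname{Tr}_j\varphi$. Definitions (for $\mathcal{O}\in\{\Omega,\mathcal{C}\}$): for $u\in\mathcal{H}_2^{\mathcal{O}}$, $(Lu)|_{\mathcal{O}}=0$ means $B^{\mathcal{O}}(\varphi|_{\mathcal{O}},u)=0$ whenever $\varphi\in\mathcal{H}_1$, $\operatorname{Tr}_1\varphi=0$; for such $u$, $\mathbf{M}^{\mathcal{O}}_Bu\in\mathcal{N}_2$ is defined by $\langle\operatorname{Tr}_1\varphi,\mathbf{M}^{\mathcal{O}}_Bu\rangle=B^{\mathcal{O}}(\varphi|_{\mathcal{O}},u)$ for all $\varphi\in\mathcal{H}_1$. For $u\in\mathcal{H}_2^{\mathcal{O}}$, $L(u\mathbf{1}_{\mathcal{O}})\in\mathcal{H}_1^*$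 is $\langle\varphi,L(u\mathbf{1}_{\mathcal{O}})\rangle=B^{\mathcal{O}}(\varphi|_{\mathcal{O}},u)$; $L(\mathbf{1}_{\mathcal{O}}F)=L(F|_{\mathcal O}\mathbf 1_{\mathcal O})$ for $F\in\mathcal{H}_2$. Newton potential: $\Pi^LH\in\mathcal{H}_2$ ($H\in\mathcal{H}_1^*$) is the unique element with $B(\varphi,\Pi^LH)=\langle\varphi,H\rangle$ for all $\varphi\in\mathcal{H}_1$. Single layer: for $g\in\mathcal{N}_2$, $\mathbf{S}^L_\Omega g\in\mathcal{H}_2$ is unique with $B(\varphi,\mathbf{S}^L_\Omega g)=\langle\operatorname{Tr}_1\varphi,g\rangle$ for all $\varphi\in\mathcal{H}_1$. Double layer: $\mathbf{D}^B_{\mathcal{O}}f=-F|_{\mathcal{O}}+(\Pi^L(L(\mathbf{1}_{\mathcal{O}}F)))|_{\mathcal{O}}\in\mathcal H_2^{\mathcal O}$ for any $F\in\mathcal H_2$ with $\operatorname{Tr}_2F=f\in\mathcal{D}_2$ (independent of the choice of $F$). The restrictions $(\mathbf S^L_\Omega g)|_{\mathcal O}$ and $\mathbf D^B_{\mathcal O}f$ satisfy $(Lu)|_{\mathcal O}=0$, so their Neumann boundary values are defined. *)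

(* Defs.v *)
From HB Require Import structures.
From mathcomp Require Import all_boot all_order all_algebra.
From mathcomp Require Import complex.
From mathcomp Require Import classical_sets boolp reals.
From Stdlib Require Import ClassicalEpsilon.

Set Implicit Arguments.
Unset Strict Implicit.
Unset Printing Implicit Defensive.

Import Order.TTheory GRing.Theory Num.Theory.
Local Open Scope ring_scope.
Local Open Scope classical_set_scope.

Section Framework.
Variable R : realType.
Local Notation C := R[i].

Definition cmod (z : C) : R := Normc.normc z.

Definition creal (z : C) : R := let: Complex a _ := z in a.

Definition is_seminorm (V : lmodType C) (n : V -> R) : Prop :=
  [/\ forall x, 0 <= n x,
      forall (a : C) x, n (a *: x) = cmod a * n x &
      forall x y, n (x + y) <= n x + n y].

Definition ipnorm (V : lmodType C) (ip : V -> V -> C) (x : V) : R :=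
  Num.sqrt (creal (ip x x)).

Definition is_hilbert (V : lmodType C) (ip : V -> V -> C) : Prop :=
  [/\ forall (a : C) x x' y, ip (a *: x + x') y = a * ip x y + ip x' y,
      forall x y, ip y x = (ip x y)^*,
      forall x, 0 <= ip x x,
      forall x, ip x x = 0 -> x = 0 &
      forall u : nat -> V,
        (forall e : R, 0 < e -> exists N, forall m n, (N <= m)%N -> (N <= n)%N ->
            ipnorm ip (u m - u n) < e) ->
        exists l : V, forall e : R, 0 < e -> exists N, forall n, (N <= n)%N ->
            ipnorm ip (u n - l) < e].

Definition is_linear (V W : lmodType C) (T : V -> W) : Prop :=
  forall (a : C) x y, T (a *: x + y) = a *: T x + T y.

Definition is_bounded_linear (V W : lmodType C) (nV : V -> R) (nW : W -> R)
    (T : V -> W) : Prop :=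
  is_linear T /\ exists M : R, forall x, nW (T x) <= M * nV x.

(* quotient (semi)norm on the range {T F : F in V}: inf of the norms of preimages *)
Definition qnorm (V W : Type) (nV : V -> R) (T : V -> W) (w : W) : R :=
  inf [set nV F | F in [set F | T F = w]].

(* equality in the normed range space {T F} modulo elements of norm zero;
   both a and b are required to lie in the range of T *)
Definition qeq (V W : lmodType C) (nV : V -> R) (T : V -> W) (a b : W) : Prop :=
  [/\ exists F, T F = a, exists F, T F = b & qnorm nV T (a - b) = 0].

Definition choice_of (T : Type) (t0 : T) (P : T -> Prop) : T :=
  epsilon (inhabits t0) P.

Record framework := Framework {
  H1 : lmodType C;  H2 : lmodType C;
  ip1 : H1 -> H1 -> C;  ip2 : H2 -> H2 -> C;
  HO1 : lmodType C; HC1 : lmodType C;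
  HO2 : lmodType C; HC2 : lmodType C;
  D1h : lmodType C; D2h : lmodType C;
  nHO1 : HO1 -> R; nHC1 : HC1 -> R; nHO2 : HO2 -> R; nHC2 : HC2 -> R;
  nD1 : D1h -> R; nD2 : D2h -> R;
  Tr1 : H1 -> D1h; Tr2 : H2 -> D2h;
  rO1 : H1 -> HO1; rC1 : H1 -> HC1;
  rO2 : H2 -> HO2; rC2 : H2 -> HC2;
  B : H1 -> H2 -> C;
  BO : HO1 -> HO2 -> C;
  BC : HC1 -> HC2 -> C;
  lam : R
}.

Variable fw : framework.

Definition hn1 : H1 fw -> R := ipnorm (@ip1 fw).
Definition hn2 : H2 fw -> R := ipnorm (@ip2 fw).

(* a bounded bilinear form on the quotient spaces {r1 phi} x {r2 psi}
   (with their quotient norms), tested through representatives *)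
Definition is_bounded_bilinear_on (X1 X2 : Type) (r1 : H1 fw -> X1) (r2 : H2 fw -> X2)
    (n1 : X1 -> R) (n2 : X2 -> R) (b : X1 -> X2 -> C) : Prop :=
  [/\ forall (a : C) x x' y, b (r1 (a *: x + x')) (r2 y) = a * b (r1 x) (r2 y) + b (r1 x') (r2 y),
      forall (a : C) x y y', b (r1 x) (r2 (a *: y + y')) = a * b (r1 x) (r2 y) + b (r1 x) (r2 y') &
      exists M : R, forall x y, cmod (b (r1 x) (r2 y)) <= M * n1 (r1 x) * n2 (r2 y)].

Record framework_axioms : Prop := FrameworkAxioms {
  ax_hilbert1 : is_hilbert (@ip1 fw);
  ax_hilbert2 : is_hilbert (@ip2 fw);
  ax_snHO1 : is_seminorm (@nHO1 fw);
  ax_snHC1 : is_seminorm (@nHC1 fw);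
  ax_snHO2 : is_seminorm (@nHO2 fw);
  ax_snHC2 : is_seminorm (@nHC2 fw);
  ax_snD1 : is_seminorm (@nD1 fw);
  ax_snD2 : is_seminorm (@nD2 fw);
  ax_Tr1 : is_bounded_linear hn1 (@nD1 fw) (@Tr1 fw);
  ax_Tr2 : is_bounded_linear hn2 (@nD2 fw) (@Tr2 fw);
  ax_rO1 : is_bounded_linear hn1 (@nHO1 fw) (@rO1 fw);
  ax_rC1 : is_bounded_linear hn1 (@nHC1 fw) (@rC1 fw);
  ax_rO2 : is_bounded_linear hn2 (@nHO2 fw) (@rO2 fw);
  ax_rC2 : is_bounded_linear hn2 (@nHC2 fw) (@rC2 fw);
  ax_B : is_bounded_bilinear_on id id hn1 hn2 (@B fw);
  ax_BO : is_bounded_bilinear_on (@rO1 fw) (@rO2 fw)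
            (qnorm hn1 (@rO1 fw)) (qnorm hn2 (@rO2 fw)) (@BO fw);
  ax_BC : is_bounded_bilinear_on (@rC1 fw) (@rC2 fw)
            (qnorm hn1 (@rC1 fw)) (qnorm hn2 (@rC2 fw)) (@BC fw);
  ax_lam : 0 < lam fw;
  ax_infsup1 : forall v : H2 fw,
    lam fw * hn2 v <= sup [set cmod (B w v) / hn1 w | w in [set w : H1 fw | w != 0]];
  ax_infsup2 : forall u : H1 fw,
    lam fw * hn1 u <= sup [set cmod (B u w) / hn2 w | w in [set w : H2 fw | w != 0]];
  ax_split : forall (u : H1 fw) (v : H2 fw), B u v = BO (rO1 u) (rO2 v) + BC (rC1 u) (rC2 v);
  ax_glue1 : forall phi psi : H1 fw, qeq hn1 (@Tr1 fw) (Tr1 phi) (Tr1 psi) ->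
    exists w, [/\ qeq hn1 (@rO1 fw) (rO1 w) (rO1 phi),
                  qeq hn1 (@rC1 fw) (rC1 w) (rC1 psi) &
                  qeq hn1 (@Tr1 fw) (Tr1 w) (Tr1 phi)];
  ax_glue2 : forall phi psi : H2 fw, qeq hn2 (@Tr2 fw) (Tr2 phi) (Tr2 psi) ->
    exists w, [/\ qeq hn2 (@rO2 fw) (rO2 w) (rO2 phi),
                  qeq hn2 (@rC2 fw) (rC2 w) (rC2 psi) &
                  qeq hn2 (@Tr2 fw) (Tr2 w) (Tr2 phi)]
}.

(* g in N_2 = D_1^* : a bounded linear functional on D_1 = {Tr_1 phi} with its
   quotient norm; it is represented by a function on \hat D_1 of which only the
   values <Tr_1 phi, g> := g (Tr_1 phi) matter. *)
Definition in_N2 (g : D1h fw -> C) : Prop :=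
  (forall (a : C) phi psi, g (Tr1 (a *: phi + psi)) = a * g (Tr1 phi) + g (Tr1 psi)) /\
  exists M : R, forall phi, cmod (g (Tr1 phi)) <= M * qnorm hn1 (@Tr1 fw) (Tr1 phi).

Definition N2_eq (g h : D1h fw -> C) : Prop :=
  forall phi : H1 fw, g (Tr1 phi) = h (Tr1 phi).

(* Neumann trace M^O_B u in N_2 for u in H_2^O with (Lu)|_O = 0:
   <Tr_1 phi, M^O_B u> = B^O(phi|_O, u) for all phi.
   Generic in O: r1 = restriction to O on H_1, b = B^O. *)
Definition Mneu (X1 X2 : Type) (r1 : H1 fw -> X1) (b : X1 -> X2 -> C) (u : X2)
    : D1h fw -> C :=
  choice_of (fun _ => 0) (fun m => in_N2 m /\ forall phi, m (Tr1 phi) = b (r1 phi) u).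

Definition PiL (H : H1 fw -> C) : H2 fw :=
  choice_of 0 (fun u => forall phi, B phi u = H phi).

Definition SL (g : D1h fw -> C) : H2 fw :=
  choice_of 0 (fun u => forall phi, B phi u = g (Tr1 phi)).

(* L(1_O F) in H_1^* : phi |-> B^O(phi|_O, F|_O) *)
Definition L1 (X1 X2 : Type) (r1 : H1 fw -> X1) (r2 : H2 fw -> X2)
    (b : X1 -> X2 -> C) (F : H2 fw) : H1 fw -> C :=
  fun phi => b (r1 phi) (r2 F).

Definition preTr2 (f : D2h fw) : H2 fw := choice_of 0 (fun F => Tr2 F = f).

Definition DL (X1 X2 : lmodType C) (r1 : H1 fw -> X1) (r2 : H2 fw -> X2)
    (b : X1 -> X2 -> C) (f : D2h fw) : X2 :=
  let F := preTr2 f in - r2 F + r2 (PiL (L1 r1 r2 b F)).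

Definition TrDL (X1 X2 : Type) (r1 : H1 fw -> X1) (r2 : H2 fw -> X2)
    (b : X1 -> X2 -> C) (f : D2h fw) : D2h fw :=
  let F := preTr2 f in - Tr2 F + Tr2 (PiL (L1 r1 r2 b F)).

(* TrO : \hat H_2^O -> \hat D_2 induces a bounded operator H_2^O -> D_2 with
   Tr_2 F = TrO (F|_O) (in D_2) for all F in H_2 *)
Definition is_partial_trace (X2 : lmodType C) (r2 : H2 fw -> X2) (TrO : X2 -> D2h fw) : Prop :=
  [/\ forall F, exists G, Tr2 G = TrO (r2 F),
      forall (a : C) F G, qeq hn2 (@Tr2 fw) (TrO (r2 (a *: F + G))) (a *: TrO (r2 F) + TrO (r2 G)),
      exists M : R, forall F, qnorm hn2 (@Tr2 fw) (TrO (r2 F)) <= M * qnorm hn2 r2 (r2 F) &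
      forall F, qeq hn2 (@Tr2 fw) (Tr2 F) (TrO (r2 F))].

End Framework.

(* Main.v *)
Require Import Defs.
From HB Require Import structures.
From mathcomp Require Import all_boot all_order all_algebra.
From mathcomp Require Import complex.
From mathcomp Require Import classical_sets boolp reals.
From mathcomp Require Import ring lra.
Import Order.TTheory GRing.Theory Num.Theory.
Local Open Scope ring_scope.

Section Archi.
Variable R : realType.
Lemma archi_eps (K e : R) : 0 < e -> exists N : nat, forall n, (N <= n)%N -> K / n.+1%:R < e.
Proof.
move=> e0; exists (Num.bound (`|K| / e)) => n hn.
have hb := archi_boundP (divr_ge0 (normr_ge0 K) (ltW e0)).
have : `|K| / e < n.+1%:R.
  by apply: lt_le_trans hb _; rewrite ler_nat; apply: leq_trans hn _.
rewrite ltr_pdivrMr // => h.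
rewrite ltr_pdivrMr ?ltr0Sn //; apply: le_lt_trans (ler_norm K) _.
by rewrite mulrC.
Qed.
End Archi.
Arguments archi_eps {R}.

Section CLemmas.
Variable R : realType.
Local Notation C := R[i].
Lemma rcD (r s : R) : (r + s)%:C%C = r%:C%C + s%:C%C :> C. Proof. exact: rmorphD. Qed.
Lemma rcB (r s : R) : (r - s)%:C%C = r%:C%C - s%:C%C :> C. Proof. exact: rmorphB. Qed.
Lemma rcM (r s : R) : (r * s)%:C%C = r%:C%C * s%:C%C :> C. Proof. exact: rmorphM. Qed.
Lemma rcMn (r : R) n : (r *+ n)%:C%C = r%:C%C *+ n :> C. Proof. exact: rmorphMn. Qed.
Lemma rcX (r : R) n : (r ^+ n)%:C%C = r%:C%C ^+ n :> C. Proof. exact: rmorphXn. Qed.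
Lemma rcn n : (n%:R : R)%:C%C = n%:R :> C. Proof. exact: rmorph_nat. Qed.
Lemma cjD (a b : C) : (a + b)^* = a^* + b^*. Proof. exact: rmorphD. Qed.
Lemma cjM (a b : C) : (a * b)^* = a^* * b^*. Proof. exact: rmorphM. Qed.
Lemma cjN (a : C) : (- a)^* = - a^*. Proof. exact: rmorphN. Qed.
Lemma cjV (a : C) : (a^-1)^* = (a^*)^-1. Proof. exact: fmorphV. Qed.
End CLemmas.

Section Hilb.
Local Open Scope classical_set_scope.
Variable R : realType.
Local Notation C := R[i].
Variable V : lmodType C.
Variable ip : V -> V -> C.
Hypothesis hV : is_hilbert ip.

Lemma ipDZl a x x' y : ip (a *: x + x') y = a * ip x y + ip x' y.
Proof. by have [h _ _ _ _] := hV; apply: h. Qed.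
Lemma ipC x y : ip y x = (ip x y)^*.
Proof. by have [_ h _ _ _] := hV; apply: h. Qed.
Lemma ipxx_ge0 x : 0 <= ip x x.
Proof. by have [_ _ h _ _] := hV; apply: h. Qed.
Lemma ipxx_eq0 x : ip x x = 0 -> x = 0.
Proof. by have [_ _ _ h _] := hV; apply: h. Qed.

Lemma ip0l y : ip 0 y = 0.
Proof.
have := ipDZl 1 0 0 y; rewrite scaler0 addr0 mul1r.
by move/(congr1 (fun t => t - ip 0 y)); rewrite subrr addrK.
Qed.
Lemma ipDl x x' y : ip (x + x') y = ip x y + ip x' y.
Proof. by have := ipDZl 1 x x' y; rewrite scale1r mul1r. Qed.
Lemma ipZl a x y : ip (a *: x) y = a * ip x y.
Proof. by have := ipDZl a x 0 y; rewrite addr0 ip0l addr0. Qed.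
Lemma ipNl x y : ip (- x) y = - ip x y.
Proof. by rewrite -scaleN1r ipZl mulN1r. Qed.
Lemma ipBl x x' y : ip (x - x') y = ip x y - ip x' y.
Proof. by rewrite ipDl ipNl. Qed.
Lemma ipDr x y y' : ip x (y + y') = ip x y + ip x y'.
Proof. by rewrite ipC ipDl rmorphD (ipC y x) (ipC y' x). Qed.
Lemma ipZr a x y : ip x (a *: y) = a^* * ip x y.
Proof. by rewrite ipC ipZl rmorphM (ipC y x). Qed.
Lemma ip0r x : ip x 0 = 0.
Proof. by rewrite ipC ip0l conjC0. Qed.
Lemma ipNr x y : ip x (- y) = - ip x y.
Proof. by rewrite -scaleN1r ipZr conjCN1 mulN1r. Qed.
Lemma ipBr x y y' : ip x (y - y') = ip x y - ip x y'.
Proof. by rewrite ipDr ipNr. Qed.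

Definition nq x := creal (ip x x).
Local Notation nn := (ipnorm ip).

Lemma ipxxE x : ip x x = (nq x)%:C%C.
Proof.
have := ipxx_ge0 x; rewrite /nq; case: (ip x x) => a b.
by rewrite lecE /= => /andP[/eqP -> _].
Qed.
Lemma nq_ge0 x : 0 <= nq x.
Proof. by have := ipxx_ge0 x; rewrite ipxxE lecR. Qed.
Lemma nn_ge0 x : 0 <= nn x.
Proof. exact: sqrtr_ge0. Qed.
Lemma nn_sq x : nn x ^+ 2 = nq x.
Proof. by rewrite sqr_sqrtr // nq_ge0. Qed.
Lemma nq_eq0 x : nq x = 0 -> x = 0.
Proof. by move=> h; apply: ipxx_eq0; rewrite ipxxE h. Qed.
Lemma nn_eq0 x : nn x = 0 -> x = 0.
Proof.
move=> h; apply: nq_eq0; rewrite -nn_sq h; exact: expr0n.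
Qed.
Lemma nn0 : nn 0 = 0.
Proof. by rewrite /ipnorm ip0l /= sqrtr0. Qed.

Lemma cmodE (z : C) : `|z| = (cmod z)%:C%C.
Proof. by case: z => a b; rewrite normc_def /cmod /=. Qed.
Lemma cmod_ge0 (z : C) : 0 <= cmod z.
Proof. by have := normr_ge0 z; rewrite cmodE ler0c. Qed.
Lemma cmod_eq0 (z : C) : cmod z = 0 -> z = 0.
Proof. by move=> h; apply/normr0_eq0; rewrite cmodE h. Qed.

Lemma ip_expand x y t : ip (x - t *: y) (x - t *: y) =
  ip x x - t^* * ip x y - t * ip y x + t * t^* * ip y y.
Proof. rewrite !(ipBl, ipBr, ipZl, ipZr); ring. Qed.

Lemma ip_proj x y : ip y y != 0 ->
  ip (x - (ip x y / ip y y) *: y) (x - (ip x y / ip y y) *: y) =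
  ip x x - `|ip x y| ^+ 2 / ip y y.
Proof.
move=> q0; have hq : (ip y y)^* = ip y y := geC0_conj (ipxx_ge0 y).
have ht : (ip x y / ip y y)^* = (ip x y)^* / ip y y.
  by rewrite rmorphM fmorphV; congr (_ * _^-1).
rewrite ip_expand ht normCK (ipC x y); field; exact: q0.
Qed.

Lemma CS x y : cmod (ip x y) <= nn x * nn y.
Proof.
have [q0|q0] := eqVneq (ip y y) 0.
  rewrite (ipxx_eq0 _ q0) ip0r nn0 mulr0.
  by rewrite -lecR -cmodE normr0.
have qp : 0 < ip y y by rewrite lt_def q0 ipxx_ge0.
have := ipxx_ge0 (x - (ip x y / ip y y) *: y); rewrite ip_proj //.
rewrite subr_ge0 ler_pdivrMr // cmodE -rmorphXn !ipxxE -rmorphM lecR => h.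
rewrite -(@ler_pXn2r _ 2) ?nnegrE ?mulr_ge0 ?nn_ge0 ?cmod_ge0 //.
by rewrite exprMn !nn_sq.
Qed.


Lemma nnN x : nn (- x) = nn x.
Proof. by rewrite /ipnorm ipNl ipNr opprK. Qed.
Lemma nnB x y : nn (x - y) = nn (y - x).
Proof. by rewrite -nnN opprB. Qed.

Lemma nqE x : nq x = nn x ^+ 2.
Proof. by rewrite nn_sq. Qed.

Lemma Re_le_cmod (z : C) : creal (z + z^*) <= 2 * cmod z.
Proof.
case: z => a b /=; rewrite /cmod /=.
have h : a <= Num.sqrt (a ^+ 2 + b ^+ 2).
  apply: le_trans (ler_norm a) _.
  by rewrite -sqrtr_sqr ler_sqrt ?addr_ge0 ?sqr_ge0 // lerDl sqr_ge0.
lra.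
Qed.

Lemma crealD (a b : C) : creal (a + b) = creal a + creal b.
Proof. by case: a; case: b. Qed.

Lemma nqD x y : nq (x + y) = nq x + nq y + creal (ip x y + (ip x y)^*).
Proof.
rewrite /nq ipDl !ipDr (ipC x y) !crealD; lra.
Qed.

Lemma nn_triangle x y : nn (x + y) <= nn x + nn y.
Proof.
rewrite -(@ler_pXn2r _ 2) ?nnegrE ?addr_ge0 ?nn_ge0 //.
rewrite sqrrD !nn_sq nqD.
have := Re_le_cmod (ip x y); have := CS x y; lra.
Qed.


Lemma para a b : nq (a + b) + nq (a - b) = (nq a + nq b) *+ 2.
Proof.
apply: complexI; rewrite !(rcD, rcMn) -!ipxxE.
rewrite !(ipDl, ipDr, ipNl, ipNr); ring.
Qed.

Lemma nqZn (k : nat) w : nq ((k%:R : C) *: w) = k%:R ^+ 2 * nq w.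
Proof.
apply: complexI; rewrite !(rcM, rcX) -!ipxxE ipZl ipZr conjC_nat rcn.
ring.
Qed.

Lemma projection (M : V -> Prop) :
  M 0 -> (forall x y, M x -> M y -> M (x + y)) -> (forall a x, M x -> M (a *: x)) ->
  (forall (u : nat -> V) l, (forall n, M (u n)) ->
     (forall e, 0 < e -> exists N, forall n, (N <= n)%N -> nn (u n - l) < e) -> M l) ->
  forall x, exists p, M p /\ forall m, M m -> ip (x - p) m = 0.
Proof.
move=> M0 MD MZ Mcl x.
pose S := [set nn (x - m) | m in M].
pose d := inf S.
have S0 : S !=set0 by exists (nn (x - 0)), 0.
have Slb : forall m, M m -> d <= nn (x - m).
  move=> m Mm; apply: ge_inf; last by exists m.
  by exists 0 => _ [m' _ <-]; exact: nn_ge0.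
have d0 : 0 <= d by apply: lb_le_inf => // _ [m' _ <-]; exact: nn_ge0.
pose eps (n : nat) : R := n.+1%:R^-1.
have epsp n : 0 < eps n by rewrite invr_gt0 ltr0Sn.
have epsle n k : (n <= k)%N -> eps k <= eps n.
  by move=> h; rewrite /eps lef_pV2 ?posrE ?ltr0Sn // ler_nat ltnS.
have eps1 n : eps n <= 1.
  by rewrite /eps invr_le1 ?ler1n ?unitfE ?pnatr_eq0 ?ltr0Sn.
have ex n : exists m, M m /\ nn (x - m) < d + eps n.
  have : inf S < d + eps n by rewrite ltrDl epsp.
  by case/(inf_lt S0) => _ [m Mm <-] h; exists m.
have [ms hms] := choice ex.
have cau : forall e, 0 < e -> exists N, forall n k, (N <= n)%N -> (N <= k)%N ->
    nn (ms n - ms k) < e.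
  move=> e e0.
  have [N hN] := archi_eps (8 * d + 4) (e * e) (mulr_gt0 e0 e0).
  exists N => n k hn hk.
  rewrite -(@ltr_pXn2r _ 2) ?nnegrE ?nn_ge0 ?(ltW e0) // nn_sq.
  pose h := (2%:R^-1 : C) *: (ms n + ms k).
  have Mh : M h by apply: MZ; apply: MD; [exact: (hms n).1 | exact: (hms k).1].
  have hab : (x - ms k) + (x - ms n) = (2%:R : C) *: (x - h).
    rewrite scalerBr /h scalerA mulfV ?pnatr_eq0 // scale1r scaler_nat mulr2n.
    by rewrite opprD addrACA [- ms n + _]addrC.
  have hdiff : (x - ms k) - (x - ms n) = ms n - ms k.
    by rewrite opprB addrC addrA subrK.
  have := para (x - ms k) (x - ms n); rewrite hab hdiff nqZn.
  have hxh := Slb h Mh.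
  have hk' := (hms k).2; have hn' := (hms n).2.
  have hNN := hN N (leqnn N).
  have ekN := epsle _ _ hk; have enN := epsle _ _ hn.
  have ek0 := epsp k; have en0 := epsp n; have ek1 := eps1 k; have en1 := eps1 n.
  have hA2 : nn (x - ms k) ^+ 2 <= (d + eps k) ^+ 2.
    by rewrite ler_pXn2r ?nnegrE ?nn_ge0 ?addr_ge0 ?(ltW (epsp k)) // ltW.
  have hB2 : nn (x - ms n) ^+ 2 <= (d + eps n) ^+ 2.
    by rewrite ler_pXn2r ?nnegrE ?nn_ge0 ?addr_ge0 ?(ltW (epsp n)) // ltW.
  have hH2 : d ^+ 2 <= nn (x - h) ^+ 2.
    by rewrite ler_pXn2r ?nnegrE ?nn_ge0.
  have p1 : d * eps k <= d * eps N by nra.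
  have p2 : d * eps n <= d * eps N by nra.
  have p3 : eps k * eps k <= eps N by nra.
  have p4 : eps n * eps n <= eps N by nra.
  move: hNN; rewrite -/(eps N) !nqE => hNN.
  move: (nn (x - ms k)) (nn (x - ms n)) (nn (x - h)) (nn (ms n - ms k)) hA2 hB2 hH2 hNN p1 p2 p3 p4.
  move: (eps k) (eps n) (eps N) => a b c A B H D; nra.
have [p conv] : exists p, forall e, 0 < e -> exists N, forall n, (N <= n)%N -> nn (ms n - p) < e.
  have [_ _ _ _ hc] := hV; apply: hc; exact: cau.
have Mp : M p by apply: (Mcl ms) => // n; exact: (hms n).1.
have pmin : nn (x - p) <= d.
  apply/ler_addgt0Pr => eta eta0.
  have [N1 h1] := conv (eta / 2) (divr_gt0 eta0 (ltr0Sn _ 1)).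
  have [N2 h2] := archi_eps 1 (eta / 2) (divr_gt0 eta0 (ltr0Sn _ 1)).
  pose n := maxn N1 N2.
  have -> : x - p = (x - ms n) + (ms n - p) by rewrite addrA subrK.
  apply: le_trans (nn_triangle _ _) _.
  have := h1 n (leq_maxl _ _); have := h2 n (leq_maxr _ _); have := (hms n).2.
  rewrite /eps mul1r; move: (n.+1%:R^-1) => q; lra.
exists p; split => // m Mm.
have [q0|q0] := eqVneq (ip m m) 0; first by rewrite (ipxx_eq0 _ q0) ip0r.
set t := ip (x - p) m / ip m m.
have Mpt : M (p + t *: m) by apply: MD => //; exact: MZ.
have h1 := le_trans pmin (Slb _ Mpt).
have e1 : x - (p + t *: m) = (x - p) - t *: m by rewrite opprD addrA.
move: h1; rewrite e1 -(@ler_pXn2r _ 2) ?nnegrE ?nn_ge0 // !nn_sq -lecR -!ipxxE ip_proj //.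
rewrite -subr_ge0 addrAC subrr add0r oppr_ge0 => h2.
have qp : 0 < ip m m by rewrite lt_def q0 ipxx_ge0.
have h3 : `|ip (x - p) m| ^+ 2 / ip m m = 0.
  apply/eqP; rewrite eq_le h2 divr_ge0 ?exprn_ge0 ?normr_ge0 //; exact: ltW.
move: h3 => /eqP; rewrite mulf_eq0 invr_eq0 (negPf q0) orbF expf_eq0 /= normr_eq0.
by move/eqP.
Qed.


Lemma ip_unique a b : (forall phi, ip phi a = ip phi b) -> a = b.
Proof.
move=> h; apply/eqP; rewrite -subr_eq0; apply/eqP; apply: ipxx_eq0.
by rewrite ipBr h subrr.
Qed.

Lemma cmod0 : cmod (0 : C) = 0.
Proof. by apply: complexI; rewrite -cmodE normr0. Qed.

Lemma cmod_real (r : R) : cmod (r%:C%C) = `|r|.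
Proof. by rewrite /cmod /= expr0n /= addr0 sqrtr_sqr. Qed.

Lemma riesz (l : V -> C) : (forall a x y, l (a *: x + y) = a * l x + l y) ->
  (exists K, forall x, cmod (l x) <= K * nn x) -> exists r, forall x, l x = ip x r.
Proof.
move=> lin [K hK].
have l0 : l 0 = 0.
  have := lin 1 0 0; rewrite scaler0 addr0 mul1r.
  by move/(congr1 (fun t => t - l 0)); rewrite subrr addrK.
have lD x y : l (x + y) = l x + l y by have := lin 1 x y; rewrite scale1r mul1r.
have lZ a x : l (a *: x) = a * l x by rewrite -[a *: x]addr0 lin l0 addr0.
have lB x y : l (x - y) = l x - l y.
  by rewrite -scaleN1r lD lZ mulN1r.
have [[x0 hx0]|] := pselect (exists x0, l x0 != 0); last first.
  move=> nx; exists 0 => x; rewrite ip0r.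
  by have [//|h] := eqVneq (l x) 0; exfalso; apply: nx; exists x.
pose K' := `|K| + 1.
have K'0 : 0 < K' by rewrite /K' ltr_pwDr // normr_ge0.
have hK' x : cmod (l x) <= K' * nn x.
  apply: le_trans (hK x) _; apply: ler_wpM2r; first exact: nn_ge0.
  by rewrite /K'; apply: le_trans (ler_norm K) _; rewrite lerDl.
have [p [lp hp]] : exists p, l p = 0 /\ forall m, l m = 0 -> ip (x0 - p) m = 0.
  apply: (@projection (fun m => l m = 0)) => //.
  - by move=> x y hx hy; rewrite lD hx hy addr0.
  - by move=> a x hx; rewrite lZ hx mulr0.
  move=> u l' hu conv; apply: cmod_eq0; apply/eqP; rewrite eq_le cmod_ge0 andbT.
  apply/ler_addgt0Pr => e e0; rewrite add0r.
  have [N hN] := conv (e / K') (divr_gt0 e0 K'0).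
  have := hN N (leqnn N); rewrite nnB => h.
  have -> : l l' = l (l' - u N) by rewrite lB hu subr0.
  apply: le_trans (hK' _) _.
  by rewrite -ler_pdivlMl // mulrC ltW.
set z := x0 - p.
have lz : l z = l x0 by rewrite /z lB lp subr0.
have z0 : ip z z != 0.
  apply/negP => /eqP /ipxx_eq0 hz; move: hx0; rewrite -lz hz l0 eqxx //.
have lz0 : l z != 0 by rewrite lz.
have hq : (ip z z)^* = ip z z := geC0_conj (ipxx_ge0 z).
exists (((l z)^* / ip z z) *: z) => x.
set m := x - (l x / l z) *: z.
have lm : l m = 0 by rewrite /m lB lZ mulfVK // subrr.
have h1 : ip m z = 0 by rewrite ipC hp // conjC0.
move: h1; rewrite /m ipBl ipZl => h1.
have h2 : ip x z = l x / l z * ip z z by apply/eqP; rewrite -subr_eq0 h1.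
rewrite ipZr cjM cjV hq conjCK h2; field.
by apply/andP; split.
Qed.

End Hilb.
Arguments ipDZl {R V ip}.
Arguments ipC {R V ip}.
Arguments ipxx_ge0 {R V ip}.
Arguments ipxx_eq0 {R V ip}.
Arguments ip0l {R V ip}.
Arguments ipDl {R V ip}.
Arguments ipZl {R V ip}.
Arguments ipNl {R V ip}.
Arguments ipBl {R V ip}.
Arguments ipDr {R V ip}.
Arguments ipZr {R V ip}.
Arguments ip0r {R V ip}.
Arguments ipNr {R V ip}.
Arguments ipBr {R V ip}.
Arguments ipxxE {R V ip}.
Arguments nq_ge0 {R V ip}.
Arguments nn_ge0 {R V ip}.
Arguments nn_sq {R V ip}.
Arguments nq_eq0 {R V ip}.
Arguments nn_eq0 {R V ip}.
Arguments nn0 {R V ip}.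
Arguments cmodE {R}.
Arguments cmod_ge0 {R}.
Arguments cmod_eq0 {R}.
Arguments ip_expand {R V ip}.
Arguments ip_proj {R V ip}.
Arguments CS {R V ip}.
Arguments nnN {R V ip}.
Arguments nnB {R V ip}.
Arguments nqE {R V ip}.
Arguments Re_le_cmod {R}.
Arguments crealD {R}.
Arguments nqD {R V ip}.
Arguments nn_triangle {R V ip}.
Arguments para {R V ip}.
Arguments nqZn {R V ip}.
Arguments projection {R V ip}.
Arguments ip_unique {R V ip}.
Arguments cmod0 {R}.
Arguments cmod_real {R}.
Arguments riesz {R V ip}.

Section Sup.
Variable R : realType.
Local Open Scope classical_set_scope.
Lemma sup_le_c (E : set R) c : (forall x, E x -> x <= c) -> 0 <= c -> sup E <= c.
Proof.
move=> h c0; have [[x Ex]|ne] := pselect (exists x, E x).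
  by apply: ge_sup => //; exists x.
have -> : E = set0.
  by apply/seteqP; split => y // Ey; exfalso; apply: ne; exists y.
by rewrite sup0.
Qed.
Lemma sq_bound (X Y Z : R) : X ^+ 2 <= Z * X * Y -> 0 < Z -> 0 <= X -> 0 <= Y -> X <= Z * Y.
Proof.
move=> h Z0 X0 Y0; have [->|Xp] := eqVneq X 0; first by rewrite mulr_ge0 // ltW.
have Xp' : 0 < X by rewrite lt_def Xp X0.
by rewrite -(ler_pM2r Xp') -expr2 mulrAC.
Qed.
End Sup.
Arguments sup_le_c {R}.

Section BNB.
Local Open Scope classical_set_scope.
Variable R : realType.
Local Notation C := R[i].
Variables V W : lmodType C.
Variable ipV : V -> V -> C.
Variable ipW : W -> W -> C.
Hypothesis hV : is_hilbert ipV.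
Hypothesis hW : is_hilbert ipW.
Local Notation nV := (ipnorm ipV).
Local Notation nW := (ipnorm ipW).
Variable b : V -> W -> C.
Hypothesis hb1 : forall (a : C) x x' y, b (a *: x + x') y = a * b x y + b x' y.
Hypothesis hb2 : forall (a : C) x y y', b x (a *: y + y') = a * b x y + b x y'.
Hypothesis hbM : exists M : R, forall x y, cmod (b x y) <= M * nV x * nW y.
Variable lam : R.
Hypothesis lam0 : 0 < lam.
Hypothesis inf1 : forall v, lam * nW v <= sup [set cmod (b w v) / nV w | w in [set w : V | w != 0]].
Hypothesis inf2 : forall u, lam * nV u <= sup [set cmod (b u w) / nW w | w in [set w : W | w != 0]].

Lemma bx0 x : b x 0 = 0.
Proof.
have := hb2 1 x 0 0; rewrite scaler0 addr0 mul1r.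
by move/(congr1 (fun t => t - b x 0)); rewrite subrr addrK.
Qed.

Lemma bnb_unique v : (forall phi, b phi v = 0) -> v = 0.
Proof.
move=> h; apply: (nn_eq0 hW); apply/eqP; rewrite eq_le nn_ge0 andbT.
have : lam * nW v <= 0.
  apply: le_trans (inf1 v) _; apply: sup_le_c => // _ [w _ <-].
  by rewrite h cmod0 mul0r.
by rewrite pmulr_rle0.
Qed.

Lemma bnb_exists (l : V -> C) : (forall a x y, l (a *: x + y) = a * l x + l y) ->
  (exists K, forall x, cmod (l x) <= K * nV x) -> exists u, forall phi, b phi u = l phi.
Proof.
move=> llin lbd.
have [M hM] := hbM.
pose K := `|M| + 1.
have K0 : 0 < K by rewrite /K ltr_pwDr // normr_ge0.
have hK x y : cmod (b x y) <= K * nV x * nW y.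
  apply: le_trans (hM x y) _; rewrite -!mulrA; apply: ler_wpM2r.
    by rewrite mulr_ge0 ?nn_ge0.
  by rewrite /K; apply: le_trans (ler_norm M) _; rewrite lerDl.
have exT v : exists r, forall phi, b phi v = ipV phi r.
  apply: (riesz hV).
    by move=> a x y; rewrite hb1.
  exists (K * nW v) => x; rewrite mulrAC; exact: hK.
have [T hT] := choice exT.
have TD v v' : T (v + v') = T v + T v'.
  apply: (ip_unique hV) => phi; rewrite (ipDr hV) -!hT.
  by have := hb2 1 phi v v'; rewrite scale1r mul1r.
have TZ a v : T (a *: v) = a^* *: T v.
  apply: (ip_unique hV) => phi; rewrite (ipZr hV) conjCK -!hT.
  by have := hb2 a phi v 0; rewrite !addr0 bx0 addr0.
have T0 : T 0 = 0.
  by have := TZ 0 0; rewrite scale0r conjC0 scale0r.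
have TN v : T (- v) = - T v.
  by rewrite -scaleN1r TZ conjCN1 scaleN1r.
have TB v v' : T (v - v') = T v - T v' by rewrite TD TN.
have Tup v : nV (T v) <= K * nW v.
  have h := hK (T v) v; rewrite hT in h.
  rewrite (ipxxE hV) cmod_real ger0_norm ?(nq_ge0 hV) // -(nn_sq hV) in h.
  have h1 : 0 <= nV (T v) := nn_ge0 _.
  have h2 : 0 <= nW v := nn_ge0 _.
  exact: sq_bound.
have Tlow v : lam * nW v <= nV (T v).
  apply: le_trans (inf1 v) _; apply: sup_le_c; last exact: nn_ge0.
  move=> _ [w /= w0 <-]; rewrite hT.
  have wp : 0 < nV w.
    rewrite lt_def nn_ge0 andbT; apply/eqP => /(nn_eq0 hV) h.
    by move: w0; rewrite h eqxx.
  by rewrite ler_pdivrMr // mulrC; apply: CS.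
have [r0 hr0] := riesz hV l llin lbd.
pose Mr := fun r => exists v, r = T v.
have M0 : Mr 0 by exists 0.
have MD x y : Mr x -> Mr y -> Mr (x + y).
  by move=> [v ->] [v' ->]; exists (v + v'); rewrite TD.
have MZ a x : Mr x -> Mr (a *: x).
  by move=> [v ->]; exists (a^* *: v); rewrite TZ conjCK.
have Mcl : forall (u : nat -> V) l', (forall n, Mr (u n)) ->
     (forall e, 0 < e -> exists N, forall n, (N <= n)%N -> nV (u n - l') < e) -> Mr l'.
  move=> uu l' hu conv.
  have [vs hvs] := choice hu.
  have cau : forall e, 0 < e -> exists N, forall m n, (N <= m)%N -> (N <= n)%N ->
      nW (vs m - vs n) < e.
    move=> e e0.
    have [N hN] := conv (e * lam / 2) (divr_gt0 (mulr_gt0 e0 lam0) (ltr0Sn _ 1)).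
    exists N => m n hm hn.
    have h1 := Tlow (vs m - vs n); rewrite TB -hvs -hvs in h1.
    have h2 : nV (uu m - uu n) <= nV (uu m - l') + nV (l' - uu n).
      have -> : uu m - uu n = (uu m - l') + (l' - uu n) by rewrite addrA subrK.
      exact: nn_triangle hV _ _.
    have h3 := hN m hm; have h4 := hN n hn; rewrite (nnB hV) in h4.
    rewrite -(ltr_pM2l lam0) (mulrC lam e); lra.
  have [_ _ _ _ hc] := hW.
  have [v conv2] := hc vs cau.
  exists v; apply/eqP; rewrite eq_sym -subr_eq0; apply/eqP; apply: (nn_eq0 hV).
  apply/eqP; rewrite eq_le nn_ge0 andbT; apply/ler_addgt0Pr => e e0; rewrite add0r.
  have [N1 h1] := conv (e / 2) (divr_gt0 e0 (ltr0Sn _ 1)).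
  have [N2 h2] := conv2 (e / 2 / K) (divr_gt0 (divr_gt0 e0 (ltr0Sn _ 1)) K0).
  pose n := maxn N1 N2.
  have -> : T v - l' = T (v - vs n) + (uu n - l') by rewrite TB hvs addrA subrK.
  apply: le_trans (nn_triangle hV _ _) _.
  have hA := h1 n (leq_maxl _ _).
  have hB := h2 n (leq_maxr _ _); rewrite (nnB hW) in hB.
  have hC := Tup (v - vs n).
  have hD : K * nW (v - vs n) < e / 2 by rewrite mulrC -ltr_pdivlMr.
  lra.
have [p [[u ->] hp]] := projection hV Mr M0 MD MZ Mcl r0.
have bz v : b (r0 - T u) v = 0 by rewrite hT; apply: hp; exists v.
have z0 : r0 - T u = 0.
  apply: (nn_eq0 hV); apply/eqP; rewrite eq_le nn_ge0 andbT.
  have : lam * nV (r0 - T u) <= 0.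
    apply: le_trans (inf2 _) _; apply: sup_le_c => // _ [w _ <-].
    by rewrite bz cmod0 mul0r.
  by rewrite pmulr_rle0.
exists u => phi; rewrite hT hr0; congr (ipV phi _).
by apply/eqP; rewrite eq_sym -subr_eq0 z0.
Qed.

End BNB.

From Stdlib Require Import ClassicalEpsilon.

Section Lin.
Variable R : realType.
Local Notation C := R[i].
Variables V W : lmodType C.
Variable T : V -> W.
Hypothesis hT : is_linear T.
Lemma lin0 : T 0 = 0.
Proof.
have := hT 1 0 0; rewrite scaler0 addr0 scale1r.
by move/(congr1 (fun t => t - T 0)); rewrite subrr addrK.
Qed.
Lemma linD x y : T (x + y) = T x + T y.
Proof. by have := hT 1 x y; rewrite !scale1r. Qed.
Lemma linZ a x : T (a *: x) = a *: T x.
Proof. by have := hT a x 0; rewrite !addr0 lin0 addr0. Qed.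
Lemma linN x : T (- x) = - T x.
Proof. by rewrite -scaleN1r linZ scaleN1r. Qed.
Lemma linB x y : T (x - y) = T x - T y.
Proof. by rewrite linD linN. Qed.
End Lin.
Arguments lin0 {R V W T}.
Arguments linD {R V W T}.
Arguments linZ {R V W T}.
Arguments linN {R V W T}.
Arguments linB {R V W T}.

Section Qnorm.
Local Open Scope classical_set_scope.
Variable R : realType.
Local Notation C := R[i].
Variables V W : lmodType C.
Variable ip : V -> V -> C.
Hypothesis hV : is_hilbert ip.
Local Notation n := (ipnorm ip).
Variable T : V -> W.
Hypothesis hT : is_linear T.

Lemma qn_ge0 w : 0 <= qnorm n T w.
Proof.
have [[F hF]|ne] := pselect (exists F, T F = w).
  by apply: lb_le_inf; [exists (n F), F | move=> _ [G _ <-]; exact: nn_ge0].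
have E0 : [set n F | F in [set F | T F = w]] = set0.
  by apply/seteqP; split => // y [F hF _]; exfalso; apply: ne; exists F.
by rewrite /qnorm E0 inf0.
Qed.

Lemma qn_le F : qnorm n T (T F) <= n F.
Proof.
apply: ge_inf; last by exists F.
by exists 0 => _ [G _ <-]; exact: nn_ge0.
Qed.

Lemma qn0 : qnorm n T 0 = 0.
Proof.
apply/eqP; rewrite eq_le qn_ge0 andbT.
by have := qn_le 0; rewrite (lin0 hT) nn0.
Qed.

Lemma qn_lb c w : (exists F, T F = w) -> (forall F, T F = w -> c <= n F) -> c <= qnorm n T w.
Proof.
move=> [F hF] h; apply: lb_le_inf; first by exists (n F), F.
by move=> _ [G hG <-]; apply: h.
Qed.

Lemma qn_small w : qnorm n T w = 0 -> (exists F, T F = w) ->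
  forall e, 0 < e -> exists F, T F = w /\ n F < e.
Proof.
move=> h0 [F hF] e e0.
have : qnorm n T w < e by rewrite h0.
case/inf_lt; first by exists (n F), F.
by move=> _ [G hG <-] hl; exists G.
Qed.

Lemma qn_sub0 a b : qnorm n T (T a) = 0 -> qnorm n T (T b) = 0 ->
  qnorm n T (T b - T a) = 0.
Proof.
move=> ha hb; apply/eqP; rewrite eq_le qn_ge0 andbT.
apply/ler_addgt0Pr => e e0; rewrite add0r.
have e2 : 0 < e / 2 by rewrite divr_gt0.
have [F1 [h1 n1]] := qn_small _ ha (ex_intro _ a erefl) _ e2.
have [F2 [h2 n2]] := qn_small _ hb (ex_intro _ b erefl) _ e2.
have -> : T b - T a = T (F2 - F1) by rewrite (linB hT) h1 h2.
apply: le_trans (qn_le _) _; apply: le_trans (nn_triangle hV _ _) _.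
rewrite (nnN hV); lra.
Qed.

Lemma qeq_refl w : (exists F, T F = w) -> qeq n T w w.
Proof. by move=> h; split => //; rewrite subrr qn0. Qed.

End Qnorm.
Arguments qn_ge0 {R V W ip T}.
Arguments qn_le {R V W ip T}.
Arguments qn0 {R V W ip} hV {T}.
Arguments qn_lb {R V W ip T}.
Arguments qn_small {R V W ip T w}.
Arguments qn_sub0 {R V W ip} hV {T}.
Arguments qeq_refl {R V W ip} hV {T}.

Section Main.
Local Open Scope classical_set_scope.
Variable R : realType.
Local Notation C := R[i].
Variable fw : framework R.
Hypothesis hax : framework_axioms fw.

Let hh1 := ax_hilbert1 hax.
Let hh2 := ax_hilbert2 hax.
Let Tr1l : is_linear (@Tr1 _ fw) := (ax_Tr1 hax).1.
Let Tr2l : is_linear (@Tr2 _ fw) := (ax_Tr2 hax).1.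
Let rO1l : is_linear (@rO1 _ fw) := (ax_rO1 hax).1.
Let rC1l : is_linear (@rC1 _ fw) := (ax_rC1 hax).1.
Let rO2l : is_linear (@rO2 _ fw) := (ax_rO2 hax).1.
Let rC2l : is_linear (@rC2 _ fw) := (ax_rC2 hax).1.

Lemma exB (l : Defs.H1 fw -> C) : (forall a x y, l (a *: x + y) = a * l x + l y) ->
  (exists K, forall x, cmod (l x) <= K * hn1 x) -> exists u, forall phi, B phi u = l phi.
Proof.
move=> hl hb; have [b1 b2 bM] := ax_B hax.
exact: (bnb_exists _ _ _ _ _ hh1 hh2 _ b1 b2 bM _ (ax_lam hax) (ax_infsup1 hax) (ax_infsup2 hax) _ hl hb).
Qed.

Lemma uniqB (v : Defs.H2 fw) : (forall phi, B phi v = 0) -> v = 0.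
Proof. exact: (bnb_unique _ _ _ _ _ hh2 _ _ (ax_lam hax) (ax_infsup1 hax)). Qed.

Lemma BD2 (phi : Defs.H1 fw) y y' : B phi (y + y') = B phi y + B phi y'.
Proof. by have [_ b2 _] := ax_B hax; have := b2 1 phi y y'; rewrite scale1r mul1r. Qed.
Lemma BB2 (phi : Defs.H1 fw) y y' : B phi (y - y') = B phi y - B phi y'.
Proof.
have [_ b2 _] := ax_B hax; have := b2 (-1) phi y' y.
by rewrite scaleN1r mulN1r addrC => ->; rewrite addrC.
Qed.

Section Bil.
Variables X1 X2 : lmodType C.
Variable r1 : Defs.H1 fw -> X1.
Variable r2 : Defs.H2 fw -> X2.
Variable b : X1 -> X2 -> C.
Hypothesis r1l : is_linear r1.
Hypothesis r2l : is_linear r2.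
Hypothesis hb : is_bounded_bilinear_on r1 r2 (qnorm (@hn1 _ fw) r1) (qnorm (@hn2 _ fw) r2) b.

Lemma bil_B1 x x' y : b (r1 (x - x')) (r2 y) = b (r1 x) (r2 y) - b (r1 x') (r2 y).
Proof.
have [b1 _ _] := hb; have := b1 (-1) x' x y.
by rewrite scaleN1r mulN1r addrC => ->; rewrite addrC.
Qed.
Lemma bil_D2 x y y' : b (r1 x) (r2 (y + y')) = b (r1 x) (r2 y) + b (r1 x) (r2 y').
Proof. by have [_ b2 _] := hb; have := b2 1 x y y'; rewrite scale1r mul1r. Qed.
Lemma bil_B2 x y y' : b (r1 x) (r2 (y - y')) = b (r1 x) (r2 y) - b (r1 x) (r2 y').
Proof.
have [_ b2 _] := hb; have := b2 (-1) x y' y.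
by rewrite scaleN1r mulN1r addrC => ->; rewrite addrC.
Qed.
Lemma bil_r10 y : b (r1 0) (r2 y) = 0.
Proof. by have := bil_B1 0 0 y; rewrite subrr subrr. Qed.

Lemma bil_zero1 x y : qnorm (@hn1 _ fw) r1 (r1 x) = 0 -> b (r1 x) (r2 y) = 0.
Proof.
move=> h0; have [_ _ [M hM]] := hb; apply: cmod_eq0; apply/eqP.
by rewrite eq_le cmod_ge0 andbT; have := hM x y; rewrite h0 mulr0 mul0r.
Qed.

Lemma bil_qeq w phi y : qeq (@hn1 _ fw) r1 (r1 w) (r1 phi) -> b (r1 w) (r2 y) = b (r1 phi) (r2 y).
Proof.
case=> _ _; rewrite -(linB r1l) => /(bil_zero1 _ y); rewrite bil_B1 => /eqP.
by rewrite subr_eq0 => /eqP.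
Qed.

Lemma bil_bound y : exists K, forall phi, cmod (b (r1 phi) (r2 y)) <= K * hn1 phi.
Proof.
have [_ _ [M hM]] := hb; exists (`|M| * qnorm (@hn2 _ fw) r2 (r2 y)) => phi.
apply: le_trans (hM phi y) _; rewrite mulrAC.
apply: (@le_trans _ _ (`|M| * qnorm (@hn2 _ fw) r2 (r2 y) * qnorm (@hn1 _ fw) r1 (r1 phi))).
  apply: ler_wpM2r; [exact: qn_ge0 | apply: ler_wpM2r; [exact: qn_ge0 | exact: ler_norm]].
apply: ler_wpM2l; [by rewrite mulr_ge0 ?normr_ge0 ?qn_ge0 | exact: qn_le].
Qed.

Lemma Mneu_exists y : (forall phi, Tr1 phi = 0 -> b (r1 phi) (r2 y) = 0) ->
  exists m, in_N2 m /\ forall phi, m (Tr1 phi) = b (r1 phi) (r2 y).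
Proof.
move=> hker.
pose m := fun d => b (r1 (choice_of 0 (fun phi => Tr1 phi = d))) (r2 y).
have key phi : m (Tr1 phi) = b (r1 phi) (r2 y).
  rewrite /m /choice_of; set psi := epsilon _ _.
  have hpsi : Tr1 psi = Tr1 phi by apply: (epsilon_spec _ (fun p => Tr1 p = Tr1 phi)); exists phi.
  apply/eqP; rewrite -subr_eq0 -bil_B1; apply/eqP; apply: hker.
  by rewrite (linB Tr1l) hpsi subrr.
exists m; split => //; split.
  by move=> a phi psi; rewrite !key; have [b1 _ _] := hb; apply: b1.
have [K hK] := bil_bound y; exists (`|K| + 1) => phi.
have K0 : 0 < `|K| + 1 by rewrite ltr_pwDr // normr_ge0.
rewrite mulrC -ler_pdivrMr //; apply: qn_lb; first by exists phi.
move=> F hF; rewrite ler_pdivrMr // -hF key mulrC.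
apply: le_trans (hK F) _; apply: ler_wpM2r; first exact: nn_ge0.
by apply: le_trans (ler_norm K) _; rewrite lerDl.
Qed.

End Bil.
Arguments bil_B1 {X1 X2 r1 r2 b}.
Arguments bil_D2 {X1 X2 r1 r2 b}.
Arguments bil_B2 {X1 X2 r1 r2 b}.
Arguments bil_r10 {X1 X2 r1 r2 b}.
Arguments bil_zero1 {X1 X2 r1 r2 b}.
Arguments bil_qeq {X1 X2 r1 r2 b}.
Arguments bil_bound {X1 X2 r1 r2 b}.
Arguments Mneu_exists {X1 X2 r1 r2 b}.

Lemma Mneu_spec (X1 X2 : Type) (r1 : Defs.H1 fw -> X1) (b : X1 -> X2 -> C) (u : X2) :
  (exists m, in_N2 m /\ forall phi, m (Tr1 phi) = b (r1 phi) u) ->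
  forall phi, Mneu r1 b u (Tr1 phi) = b (r1 phi) u.
Proof.
move=> hex phi; rewrite /Mneu /choice_of.
by have [_ ->] := epsilon_spec (inhabits (fun _ => 0))
  (fun m => in_N2 m /\ forall phi, m (Tr1 phi) = b (r1 phi) u) hex.
Qed.

Arguments Mneu_spec {X1 X2 r1 b u}.

Lemma PiL_spec (l : Defs.H1 fw -> C) : (forall a x y, l (a *: x + y) = a * l x + l y) ->
  (exists K, forall x, cmod (l x) <= K * hn1 x) -> forall phi, B phi (PiL l) = l phi.
Proof.
move=> hl hb; rewrite /PiL /choice_of.
have := epsilon_spec (inhabits (0 : Defs.H2 fw)) (fun u => forall phi, B phi u = l phi) (exB l hl hb).
exact.
Qed.

Lemma SL_spec (g : D1h fw -> C) : in_N2 g -> forall phi, B phi (SL g) = g (Tr1 phi).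
Proof.
move=> [gl [M hM]]; rewrite /SL /choice_of.
apply: (epsilon_spec (inhabits 0) (fun u => forall phi, B phi u = g (Tr1 phi))).
apply: exB; first by move=> a x y; apply: gl.
exists `|M| => x; apply: le_trans (hM x) _.
apply: le_trans (ler_wpM2r (qn_ge0 _) (ler_norm M)) _.
by apply: ler_wpM2l; [exact: normr_ge0 | exact: qn_le].
Qed.

Lemma preTr2_spec (f : D2h fw) : (exists F, Tr2 F = f) -> Tr2 (preTr2 f) = f.
Proof. by move=> hex; rewrite /preTr2 /choice_of; apply: (epsilon_spec _ (fun F => Tr2 F = f)). Qed.


Let hBO := ax_BO hax.
Let hBC := ax_BC hax.

Lemma glueO (phi : Defs.H1 fw) : Tr1 phi = 0 -> exists w,
  [/\ forall y, BO (rO1 w) (rO2 y) = BO (rO1 phi) (rO2 y),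
      forall y, BC (rC1 w) (rC2 y) = 0 &
      qnorm (@hn1 _ fw) (@Tr1 _ fw) (Tr1 w) = 0].
Proof.
move=> h0.
have hq : qeq (@hn1 _ fw) (@Tr1 _ fw) (Tr1 phi) (Tr1 0).
  split; [by exists phi | by exists 0 | by rewrite h0 (lin0 Tr1l) subrr (qn0 hh1 Tr1l)].
have [w [h1 h2 h3]] := ax_glue1 hax hq.
exists w; split => [y|y|].
- exact: (bil_qeq rO1l hBO _ _ y h1).
- by rewrite (bil_qeq rC1l hBC _ _ y h2) bil_r10.
- by case: h3 => _ _; rewrite h0 subr0.
Qed.

Lemma glueC (phi : Defs.H1 fw) : Tr1 phi = 0 -> exists w,
  [/\ forall y, BC (rC1 w) (rC2 y) = BC (rC1 phi) (rC2 y),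
      forall y, BO (rO1 w) (rO2 y) = 0 &
      qnorm (@hn1 _ fw) (@Tr1 _ fw) (Tr1 w) = 0].
Proof.
move=> h0.
have hq : qeq (@hn1 _ fw) (@Tr1 _ fw) (Tr1 0) (Tr1 phi).
  split; [by exists 0 | by exists phi | by rewrite h0 (lin0 Tr1l) subrr (qn0 hh1 Tr1l)].
have [w [h1 h2 h3]] := ax_glue1 hax hq.
exists w; split => [y|y|].
- exact: (bil_qeq rC1l hBC _ _ y h2).
- by rewrite (bil_qeq rO1l hBO _ _ y h1) bil_r10.
- by case: h3 => _ _; rewrite (lin0 Tr1l) subr0.
Qed.

Lemma PiLO_spec (F : Defs.H2 fw) phi :
  B phi (PiL (L1 (@rO1 _ fw) (@rO2 _ fw) (@BO _ fw) F)) = BO (rO1 phi) (rO2 F).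
Proof.
apply: PiL_spec; last exact: (bil_bound hBO F).
by move=> a x y; rewrite /L1; have [b1 _ _] := hBO; apply: b1.
Qed.

Lemma PiLC_spec (F : Defs.H2 fw) phi :
  B phi (PiL (L1 (@rC1 _ fw) (@rC2 _ fw) (@BC _ fw) F)) = BC (rC1 phi) (rC2 F).
Proof.
apply: PiL_spec; last exact: (bil_bound hBC F).
by move=> a x y; rewrite /L1; have [b1 _ _] := hBC; apply: b1.
Qed.

Lemma PiL_sum (F : Defs.H2 fw) :
  PiL (L1 (@rO1 _ fw) (@rO2 _ fw) (@BO _ fw) F) + PiL (L1 (@rC1 _ fw) (@rC2 _ fw) (@BC _ fw) F) = F.
Proof.
apply/eqP; rewrite -subr_eq0; apply/eqP; apply: uniqB => phi.
by rewrite BB2 BD2 PiLO_spec PiLC_spec (ax_split hax phi F) subrr.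
Qed.


Lemma main_result :
  [/\ forall f : D2h fw, (exists F, Tr2 F = f) ->
        qeq (@hn2 _ fw) (@Tr2 _ fw)
          (TrDL (@rO1 _ fw) (@rO2 _ fw) (@BO _ fw) f + TrDL (@rC1 _ fw) (@rC2 _ fw) (@BC _ fw) f)
          (- f),
      forall g : D1h fw -> R[i], in_N2 g ->
        N2_eq (fun d => Mneu (@rO1 _ fw) (@BO _ fw) (rO2 (SL g)) d
                        + Mneu (@rC1 _ fw) (@BC _ fw) (rC2 (SL g)) d) g,
      forall f : D2h fw, (exists F, Tr2 F = f) ->
        N2_eq (fun d => Mneu (@rO1 _ fw) (@BO _ fw) (DL (@rO1 _ fw) (@rO2 _ fw) (@BO _ fw) f) d
                        - Mneu (@rC1 _ fw) (@BC _ fw) (DL (@rC1 _ fw) (@rC2 _ fw) (@BC _ fw) f) d)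
              (fun _ => 0) &
      forall (TrO : HO2 fw -> D2h fw) (TrC : HC2 fw -> D2h fw),
        is_partial_trace (@rO2 _ fw) TrO -> is_partial_trace (@rC2 _ fw) TrC ->
        forall g : D1h fw -> R[i], in_N2 g ->
          qeq (@hn2 _ fw) (@Tr2 _ fw) (TrO (rO2 (SL g)) - TrC (rC2 (SL g))) 0].
Proof.
split.
- move=> f hf; have hF := preTr2_spec f hf.
  rewrite /TrDL /=.
  set F := preTr2 f.
  set PO := PiL _; set PC := PiL _.
  have hs : PO + PC = F := PiL_sum F.
  rewrite addrACA -(linD Tr2l) hs hF -addrA addNr addr0.
  by apply: (qeq_refl hh2 Tr2l); exists (- F); rewrite (linN Tr2l) hF.
- move=> g hg phi /=.
  have hS := SL_spec g hg.
  have [gl [M hM]] := hg.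
  have g0 w : qnorm (@hn1 _ fw) (@Tr1 _ fw) (Tr1 w) = 0 -> g (Tr1 w) = 0.
    move=> h; apply: cmod_eq0; apply/eqP; rewrite eq_le cmod_ge0 andbT.
    by have := hM w; rewrite h mulr0.
  rewrite (Mneu_spec (Mneu_exists hBO (SL g) _)); last first.
    move=> psi h0; have [w [h1 h2 h3]] := glueO _ h0.
    have := hS w; rewrite (ax_split hax) h1 h2 addr0 g0 //.
  rewrite (Mneu_spec (Mneu_exists hBC (SL g) _)); last first.
    move=> psi h0; have [w [h1 h2 h3]] := glueC _ h0.
    have := hS w; rewrite (ax_split hax) h1 h2 add0r g0 //.
  by rewrite -(ax_split hax) hS.
- move=> f hf phi /=.
  rewrite /DL /=.
  set F := preTr2 f.
  set PO := PiL (L1 _ _ _ F); set PC := PiL (L1 _ _ _ F).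
  have hs : PO + PC = F := PiL_sum F.
  have eO : - rO2 F + rO2 PO = rO2 (PO - F) by rewrite (linB rO2l) addrC.
  have eC : - rC2 F + rC2 PC = rC2 (PC - F) by rewrite (linB rC2l) addrC.
  rewrite eO eC.
  rewrite (Mneu_spec (Mneu_exists hBO (PO - F) _)); last first.
    move=> psi h0; have [w [h1 h2 h3]] := glueO _ h0.
    have := BB2 w PO F; rewrite PiLO_spec !(ax_split hax w) h1 !h2 !addr0.
    by rewrite subrr => /esym.
  rewrite (Mneu_spec (Mneu_exists hBC (PC - F) _)); last first.
    move=> psi h0; have [w [h1 h2 h3]] := glueC _ h0.
    have := BB2 w PC F; rewrite PiLC_spec !(ax_split hax w) h1 !h2 !add0r.
    by rewrite subrr => /esym.
  rewrite !(bil_B2 hBO) !(bil_B2 hBC).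
  have e1 := PiLO_spec F phi; rewrite (ax_split hax) in e1.
  have e2 : BC (rC1 phi) (rC2 F) = BC (rC1 phi) (rC2 PO) + BC (rC1 phi) (rC2 PC).
    by rewrite -(bil_D2 hBC) hs.
  rewrite e2 -e1; ring.
- move=> TrO TrC hO hC g hg.
  set u := SL g.
  have [exO _ _ eqO] := hO; have [exC _ _ eqC] := hC.
  have [G1 hG1] := exO u; have [G2 hG2] := exC u.
  split; first by exists (G1 - G2); rewrite (linB Tr2l) hG1 hG2.
    by exists 0; rewrite (lin0 Tr2l).
  rewrite subr0.
  have -> : TrO (rO2 u) - TrC (rC2 u) = Tr2 (u - G2) - Tr2 (u - G1).
    by rewrite !(linB Tr2l) hG1 hG2 opprB [in RHS]addrC [in RHS]addrA subrK.
  apply: (qn_sub0 hh2 Tr2l).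
    by rewrite (linB Tr2l) hG1; case: (eqO u).
  by rewrite (linB Tr2l) hG2; case: (eqC u).
Qed.

End Main.

Theorem lemma5p4 (R : realType) (fw : framework R) :
  framework_axioms fw ->
  [/\ (* Tr^O D^B_O f + Tr^C D^B_C f = - f  in D_2 *)
      forall f : D2h fw, (exists F, Tr2 F = f) ->
        qeq (@hn2 _ fw) (@Tr2 _ fw)
          (TrDL (@rO1 _ fw) (@rO2 _ fw) (@BO _ fw) f + TrDL (@rC1 _ fw) (@rC2 _ fw) (@BC _ fw) f)
          (- f),
      (* M^O((S g)|_O) + M^C((S g)|_C) = g  in N_2 *)
      forall g : D1h fw -> R[i], in_N2 g ->
        N2_eq (fun d => Mneu (@rO1 _ fw) (@BO _ fw) (rO2 (SL g)) d
                        + Mneu (@rC1 _ fw) (@BC _ fw) (rC2 (SL g)) d) g,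
      (* M^O(D^B_O f) - M^C(D^B_C f) = 0  in N_2 *)
      forall f : D2h fw, (exists F, Tr2 F = f) ->
        N2_eq (fun d => Mneu (@rO1 _ fw) (@BO _ fw) (DL (@rO1 _ fw) (@rO2 _ fw) (@BO _ fw) f) d
                        - Mneu (@rC1 _ fw) (@BC _ fw) (DL (@rC1 _ fw) (@rC2 _ fw) (@BC _ fw) f) d)
              (fun _ => 0) &
      (* with partial traces: Tr^O((S g)|_O) - Tr^C((S g)|_C) = 0  in D_2 *)
      forall (TrO : HO2 fw -> D2h fw) (TrC : HC2 fw -> D2h fw),
        is_partial_trace (@rO2 _ fw) TrO -> is_partial_trace (@rC2 _ fw) TrC ->
        forall g : D1h fw -> R[i], in_N2 g ->
          qeq (@hn2 _ fw) (@Tr2 _ fw) (TrO (rO2 (SL g)) - TrC (rC2 (SL g))) 0].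
Proof. by move=> hax; exact: main_result hax. Qed.
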